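(* Let $T_1$ be a quadtree in $\mathbb{R}^d$ with $n$ cells, where the dimension $d$ is a constant. Then its extended quadtree $T^*$ has $\mathcal{O}(n)$ cells.
   Context: A quadtree on an axis-aligned root hypercube $R\subset\mathbb{R}^d$ is a hierarchical decomposition in which every node has an associated axis-aligned hypercube (cell) and is either a leaf or has $2^d$ equal-sized children whose cells subdivide its cell. The size $|C|$ of a cell is its edge length. Two cells are neighbors if they are interior-disjoint and share (part of) a $(d-1)$-dimensional facet. For an integer $j$, a cell $C$ is $2^j$-smooth if every leaf neighboring $C$ has size at most $2^j|C|$. Extended quadtree: the cells of $T_1$ get brand $1$. Recursively, for $j\ge1$, let $T^j$ be the quadtree formed by $\bigcup_{i\le j}T_i$, and let $T_{j+1}$ be the minimal set of cells obtained by splitting cells of $T^j$ such that every cell of $T_j$ is $2^j$-smooth in the resulting quadtree; the cells of $T_{j+1}$ get brand $j+1$. The extended quadtree is $T^*=T^{d+1}$. *)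

(* Defs.v *)
From mathcomp Require Import all_boot all_order.
From mathcomp Require Export finmap.
Set Implicit Arguments. Unset Strict Implicit. Unset Printing Implicit Defensive.
Local Open Scope fset_scope.

(* Root hypercube R normalized (by translation/scaling) to [0,1]^d.
   A cell (k, a) is the dyadic cube  prod_i [a_i 2^-k, (a_i+1) 2^-k],
   of edge length |C| = 2^-k ("level" k). *)
Definition cell (d : nat) : Type := (nat * {ffun 'I_d -> nat})%type.

Definition level {d} (c : cell d) : nat := c.1.

Definition valid_cell {d} (c : cell d) : Prop := forall i, c.2 i < 2 ^ c.1.

Definition root_cell (d : nat) : cell d := (0, [ffun _ => 0]).

Definition parent {d} (c : cell d) : cell d := (c.1.-1, [ffun i => (c.2 i)./2]).

Definition is_child {d} (c c' : cell d) : Prop :=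
  c'.1 = c.1.+1 /\ forall i, (c'.2 i)./2 = c.2 i.

Definition quadtree {d} (Q : {fset cell d}) : Prop :=
  [/\ root_cell d \in Q,
      (forall c, c \in Q -> valid_cell c),
      (forall c, c \in Q -> 0 < c.1 -> parent c \in Q) &
      (forall c, c \in Q ->
         (forall c', is_child c c' -> c' \in Q) \/
         (forall c', is_child c c' -> c' \notin Q))].

Definition is_leaf {d} (Q : {fset cell d}) (c : cell d) : Prop :=
  c \in Q /\ forall c', is_child c c' -> c' \notin Q.

(* Integer endpoints of the cell on the grid of mesh 2^-K (K >= level). *)
Definition lo {d} (c : cell d) (K : nat) (i : 'I_d) : nat := c.2 i * 2 ^ (K - c.1).
Definition hi {d} (c : cell d) (K : nat) (i : 'I_d) : nat := (c.2 i).+1 * 2 ^ (K - c.1).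

(* Two cells are neighbors iff they are interior-disjoint and share a
   (d-1)-dimensional piece of a facet: in exactly one coordinate direction
   their intervals touch at an endpoint, in all others they overlap with
   positive length. *)
Definition neighbors {d} (c c' : cell d) : Prop :=
  let K := maxn c.1 c'.1 in
  exists i : 'I_d,
    (hi c K i = lo c' K i \/ hi c' K i = lo c K i) /\
    forall j : 'I_d, j != i -> lo c K j < hi c' K j /\ lo c' K j < hi c K j.

(* C is 2^j-smooth in Q: every leaf L of Q neighboring C has
   |L| <= 2^j |C|, i.e. 2^-(level L) <= 2^(j - level C). *)
Definition smooth {d} (Q : {fset cell d}) (j : nat) (C : cell d) : Prop :=
  forall L, is_leaf Q L -> neighbors L C -> level C <= level L + j.

(* One step of the construction: Tnext = T^{j+1} is the minimal
   refinement (quadtree containing Tcur = T^j) in which every cell of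
   T_j = T^j \ T^{j-1} (Tprev = T^{j-1}) is 2^j-smooth. *)
Definition ext_step {d} (Tprev Tcur Tnext : {fset cell d}) (j : nat) : Prop :=
  [/\ quadtree Tnext, Tcur `<=` Tnext,
      (forall C, C \in Tcur `\` Tprev -> smooth Tnext j C) &
      (forall Q, quadtree Q -> Tcur `<=` Q ->
         (forall C, C \in Tcur `\` Tprev -> smooth Q j C) -> Tnext `<=` Q)].

(* Ts j = T^j  (Ts 0 = empty, Ts 1 = T_1);  the extended quadtree is
   T^* = Ts d.+1. *)
Definition extended_seq {d} (T1 : {fset cell d}) (Ts : nat -> {fset cell d}) : Prop :=
  [/\ Ts 0 = fset0, Ts 1 = T1 &
      forall j, 1 <= j <= d -> ext_step (Ts j.-1) (Ts j) (Ts j.+1) j].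

(* Main.v *)
Require Import Defs.
From mathcomp Require Import all_boot all_order finmap.
From mathcomp Require Import zify.
From Stdlib Require Import Classical ClassicalEpsilon.
Local Open Scope fset_scope.

Definition validb {d} (c : cell d) : bool := [forall i, c.2 i < 2 ^ c.1].
Lemma validP {d} (c : cell d) : reflect (valid_cell c) (validb c).
Proof. exact: forallP. Qed.

Definition nb {d} (C : cell d) (dl : {ffun 'I_d -> 'I_3}) : cell d :=
  (C.1, [ffun j => C.2 j + dl j - 1]).
Definition Nset {d} (T : {fset cell d}) : {fset cell d} :=
  [fset x in [seq x <- [seq nb C dl | C <- T, dl <- enum {ffun 'I_d -> 'I_3}] | validb x]].
Definition ch {d} (c : cell d) (b : {ffun 'I_d -> bool}) : cell d :=
  (c.1.+1, [ffun j => (2 * c.2 j + b j)%N]).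
Definition Qset {d} (T : {fset cell d}) : {fset cell d} :=
  Nset T `|` [fset x in [seq ch c b | c <- Nset T, b <- enum {ffun 'I_d -> bool}]].

Lemma memN {d} (T : {fset cell d}) x : x \in Nset T <-> valid_cell x /\
  exists2 C, C \in T & x.1 = C.1 /\ forall j, C.2 j <= (x.2 j).+1 /\ x.2 j <= (C.2 j).+1.
Proof.
rewrite inE mem_filter; split.
- case/andP => /validP vx /allpairsP [[C dl] /= [CT _ ex]]. split=>//. exists C => //.
  rewrite ex; split=>// j. rewrite ffunE. case: (dl j) => t Ht /=. lia.
- case => vx [C CT [e1 hj]]. apply/andP; split; first by apply/validP.
  apply/allpairsP. exists (C, [ffun j => inord ((x.2 j).+1 - C.2 j)]) => /=.
  split => //; first by rewrite mem_enum.
  case: x vx e1 hj => k f /= _ -> hj. congr pair. apply/ffunP => j.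
  rewrite !ffunE inordK; have := hj j; move: (f j) (C.2 j) => u v /=; lia.
Qed.

Lemma fin_seq (K : choiceType) (s : seq K) z : (z \in [fset x in s]) = (z \in s).
Proof. by rewrite inE. Qed.

Lemma memQ {d} (T : {fset cell d}) x : x \in Qset T <->
  x \in Nset T \/ exists c b, c \in Nset T /\ x = ch c b.
Proof.
rewrite in_fsetU [X in _ || X]fin_seq; split.
- case/orP => [h|/allpairsP [[c b] /= [cN _ ->]]]; [by left | right; by exists c, b].
- case => [->//|[c [b [cN ->]]]]. apply/orP; right. apply/allpairsP.
  by exists (c, b); rewrite mem_enum.
Qed.

Lemma cardQ {d} (T : {fset cell d}) :
  #|` Qset T| <= (#|{ffun 'I_d -> 'I_3}| * (1 + #|{ffun 'I_d -> bool}|)) * #|` T|.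
Proof.
have hN : #|` Nset T| <= #|{ffun 'I_d -> 'I_3}| * #|` T|.
  rewrite card_fseq (leq_trans (size_undup _)) // size_filter (leq_trans (count_size _ _)) //.
  by rewrite size_allpairs -cardE mulnC.
have hC : #|` [fset x in [seq ch c b | c <- Nset T, b <- enum {ffun 'I_d -> bool}]]|
    <= #|{ffun 'I_d -> bool}| * #|` Nset T|.
  by rewrite card_fseq (leq_trans (size_undup _)) // size_allpairs -cardE mulnC.
apply: leq_trans (leq_card_fsetU _ _) _.
apply: (leq_trans (leq_add hN (leq_trans hC (leq_mul (leqnn _) hN)))).
by rewrite mulnDr muln1 mulnDl mulnCA -mulnA.
Qed.

Lemma child_parent {d} {c c' : cell d} : is_child c c' -> parent c' = c.
Proof.
case: c c' => k a [k' a'] [/= -> h]. rewrite /parent /=. congr pair.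
by apply/ffunP => i; rewrite ffunE h.
Qed.

Lemma is_child_ch {d} (c : cell d) b : is_child c (ch c b).
Proof.
split => // i. rewrite ffunE. move: (c.2 i) (b i) => u v. lia.
Qed.

Lemma child_is_ch {d} {c c' : cell d} : is_child c c' -> c' = ch c [ffun i => odd (c'.2 i)].
Proof.
case: c c' => k a [k' a'] [/= -> h]. rewrite /ch /=. congr pair.
apply/ffunP => i; rewrite !ffunE -h. move: (a' i) => u. lia.
Qed.

Definition anc {d} (l : nat) (c : cell d) : cell d := (l, [ffun j => c.2 j %/ 2 ^ (c.1 - l)]).

Lemma anc_in {d} (Q : {fset cell d}) c l : quadtree Q -> c \in Q -> l <= c.1 -> anc l c \in Q.
Proof.
move=> [_ _ hp _]. move e: (c.1 - l) => n. elim: n c e => [|n IH] [k a] /= e cQ hl.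
  have -> : anc l (k, a) = (k, a); last by [].
  rewrite /anc /= e expn0.
  have -> : l = k by lia.
  by congr pair; apply/ffunP => j; rewrite ffunE divn1.
have c0 : 0 < k by lia.
have := IH (parent (k, a)). rewrite /parent /= => /(_ ltac:(lia)) /(_ (hp _ cQ c0)) /(_ ltac:(lia)).
have -> // : anc l (k.-1, [ffun i => (a i)./2]) = anc l (k, a).
rewrite /anc /=. congr pair. apply/ffunP => j. rewrite !ffunE.
have -> : k - l = n.+1 by lia.
have -> : k.-1 - l = n by lia.
by rewrite expnS divnMA divn2.
Qed.

Lemma Nparent {d} (T : {fset cell d}) x : quadtree T -> x \in Nset T -> 0 < x.1 ->
  parent x \in Nset T.
Proof.
case: x => k a. move=> [_ _ hp _] /memN [vx [[k0 c] CT [/= e hj]]] /= x0.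
subst k0. apply/memN; split.
  move=> i /=. rewrite ffunE. have := vx i. rewrite /=.
  have -> : 2 ^ k = 2 * 2 ^ k.-1 by rewrite -expnS prednK.
  move: (a i) (2 ^ k.-1) => u v. lia.
exists (parent (k, c)); first by apply: hp.
split; first by [].
move=> j; rewrite /= !ffunE. have := hj j. rewrite /=. move: (c j) (a j) => u v. lia.
Qed.

Lemma Qquad {d} (T : {fset cell d}) : quadtree T -> quadtree (Qset T).
Proof.
move=> qT. have [rT vT hpT _] := qT. split.
- apply/memQ; left; apply/memN; split.
    by move=> i; rewrite ffunE.
  by exists (root_cell d) => //; split => // j; rewrite ffunE.
- move=> c /memQ [/memN [] //|[c0 [b [/memN [vc _] ->]]]].
  move=> i /=. rewrite ffunE expnS. have := vc i. move: (c0.2 i) (b i) (2 ^ c0.1) => u v w. lia.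
- move=> c /memQ [cN c0|[c0 [b [c0N ->]]] _].
    by apply/memQ; left; apply: Nparent.
  by rewrite (child_parent (is_child_ch c0 b)); apply/memQ; left.
- move=> c cQ. case cN: (c \in Nset T).
    left => c' /child_is_ch ->. apply/memQ; right. by exists c, [ffun i => odd (c'.2 i)].
  right => c' hc. apply/negP => /memQ [c'N|[x [b [xN e]]]].
    have := Nparent T c' qT c'N. rewrite (child_parent hc) cN. case: hc => -> _. by move=> /(_ isT).
  move: (child_parent hc). rewrite e (child_parent (is_child_ch x b)) => ex.
  by rewrite -ex xN in cN.
Qed.

Lemma divn_bounds y p b : 0 < p -> b * p <= y -> y < b.+1 * p -> y %/ p = b.
Proof.
move=> p0 h1 h2. apply/eqP; rewrite eqn_leq -ltnS ltn_divLR // leq_divRL // h1 h2 //.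
Qed.

Lemma smoothQ {d} (T : {fset cell d}) C L : quadtree T -> C \in T ->
  is_leaf (Qset T) L -> neighbors L C -> level C <= level L.
Proof.
move=> qT. case: C => k a CT. case: L => m b [LQ Lleaf].
rewrite /neighbors /level /lo /hi /=. case=> i [hti hoth].
rewrite leqNgt; apply/negP => hlt.
have ek : maxn m k = k by apply/maxn_idPr; exact: ltnW.
rewrite ek subnn expn0 in hti hoth.
have [p hpd] : exists p, p = 2 ^ (k - m) by eexists.
rewrite -hpd in hti hoth.
have p0 : 0 < p by rewrite hpd expn_gt0.
have hy : forall j, exists y, y %/ p = b j /\ a j <= y.+1 /\ y <= (a j).+1.
  move=> j. case: (eqVneq j i) => [->|ne].
    case: hti; rewrite !muln1 => h.
      exists (a i - 1). split; last by move: (a _) => ai; lia.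
      apply: divn_bounds => //; move: h; rewrite ?mulSn; move: (b i * p) (a i) => q ai; lia.
    exists (a i).+1. split; last by move: (a _) => ai; lia.
    apply: divn_bounds => //; move: h; rewrite ?mulSn; move: (b i * p) (a i) => q ai; lia.
  have [h1 h2] := hoth j ne. rewrite !muln1 in h1 h2. exists (a j). split; last by move: (a _) => ai; lia.
  apply: divn_bounds => //; move: h1 h2; rewrite ?mulSn; move: (b j * p) (a j) => q ai; lia.
have [f hf] := fin_all_exists hy.
pose B : cell d := (k, [ffun j => f j]).
have [_ vQ _ _] := Qquad T qT.
have BN : B \in Nset T.
  apply/memN; split.
    move=> j /=. rewrite ffunE. have := vQ _ LQ j. rewrite /= => hbj.
    have [hj1 _] := hf j. rewrite -hj1 ltn_divLR // in hbj.
    by rewrite hpd -expnD subnKC in hbj; last exact: ltnW.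
  exists (k, a) => //. split => // j. rewrite /= ffunE. by have [_ ?] := hf j.
have hA : anc m.+1 B \in Qset T.
  apply: (anc_in _ _ _ (Qquad T qT)) => //. by apply/memQ; left.
have hc : is_child (m, b) (anc m.+1 B).
  split => // j. rewrite /= !ffunE.
  have [<- _] := hf j. rewrite -divn2 -divnMA -expnSr hpd.
  by have -> : (k - m.+1).+1 = k - m by lia.

by have := Lleaf _ hc; rewrite hA.
Qed.

Lemma quadI {d} (Q1 Q2 : {fset cell d}) : quadtree Q1 -> quadtree Q2 -> quadtree (Q1 `&` Q2).
Proof.
move=> [r1 v1 p1 c1] [r2 v2 p2 c2]; split.
- by rewrite in_fsetI r1 r2.
- by move=> c; rewrite in_fsetI => /andP [/v1].
- by move=> c; rewrite in_fsetI => /andP [h1 h2] c0; rewrite in_fsetI p1 ?p2.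
- move=> c; rewrite in_fsetI => /andP [h1 h2].
  case: (c1 _ h1) => a1; last by right => c' /a1; rewrite in_fsetI => /negbTE ->.
  case: (c2 _ h2) => a2; last by right => c' /a2; rewrite in_fsetI andbC => /negbTE ->.
  by left => c' hc; rewrite in_fsetI a1 ?a2.
Qed.

Lemma leafI {d} (Q1 Q2 : {fset cell d}) L : quadtree Q1 -> quadtree Q2 ->
  is_leaf (Q1 `&` Q2) L -> is_leaf Q1 L \/ is_leaf Q2 L.
Proof.
move=> [_ _ _ c1] [_ _ _ c2] [LI Ll]. move: LI; rewrite in_fsetI => /andP [h1 h2].
case: (c1 _ h1) => a1; last by left.
case: (c2 _ h2) => a2; last by right.
have hc := is_child_ch L [ffun=> false].
by have := Ll _ hc; rewrite in_fsetI a1 ?a2.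
Qed.

Definition Pgood {d} (Tprev Tcur : {fset cell d}) (j : nat) (Q : {fset cell d}) : Prop :=
  [/\ quadtree Q, Tcur `<=` Q & forall C, C \in Tcur `\` Tprev -> smooth Q j C].

Lemma PgoodI {d} (Tprev Tcur : {fset cell d}) j Q1 Q2 :
  Pgood Tprev Tcur j Q1 -> Pgood Tprev Tcur j Q2 -> Pgood Tprev Tcur j (Q1 `&` Q2).
Proof.
move=> [q1 s1 m1] [q2 s2 m2]; split.
- exact: quadI.
- by rewrite fsubsetI s1 s2.
- move=> C hC L hL hn. case: (leafI _ _ _ q1 q2 hL) => hL'.
    exact: (m1 _ hC L hL' hn).
  exact: (m2 _ hC L hL' hn).
Qed.

Lemma Pleast {d} (Tprev Tcur : {fset cell d}) j Q0 : Pgood Tprev Tcur j Q0 ->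
  exists Qm, Pgood Tprev Tcur j Qm /\ forall Q, Pgood Tprev Tcur j Q -> Qm `<=` Q.
Proof.
have : #|` Q0| < (#|` Q0|).+1 by [].
move: {2}(#|` Q0|).+1 => n. elim: n Q0 => [|n IH] Q0 hn PQ0; first by rewrite ltn0 in hn.
case: (classic (forall Q, Pgood Tprev Tcur j Q -> Q0 `<=` Q)) => h.
  by exists Q0.
have [Q hQ] := not_all_ex_not _ _ h.
have [PQ nQ] := imply_to_and _ _ hQ.
apply: (IH (Q0 `&` Q)); last exact: PgoodI.
have : Q0 `&` Q `<` Q0.
  rewrite fproperE fsubsetIl /= fsubsetI fsubset_refl /=. by apply/negP.
move/fproper_ltn_card => h'. rewrite ltnS in hn. exact: leq_trans h' hn.
Qed.

Lemma PQset {d} (Tprev Tcur : {fset cell d}) j : quadtree Tcur -> Pgood Tprev Tcur j (Qset Tcur).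
Proof.
move=> qT. have [_ vT _ _] := qT. split.
- exact: Qquad.
- apply/fsubsetP => C CT. apply/memQ; left; apply/memN; split; first exact: vT.
  by exists C.
- move=> C. rewrite in_fsetD => /andP [_ CT] L hL hn.
  apply: leq_trans (smoothQ Tcur C L qT CT hL hn) _. exact: leq_addr.
Qed.

Lemma ex_step {d} (Tprev Tcur : {fset cell d}) j : quadtree Tcur ->
  exists Tn, ext_step Tprev Tcur Tn j.
Proof.
move=> qT. have [Qm [[q s m] hm]] := Pleast _ _ _ _ (PQset Tprev Tcur j qT).
exists Qm; split => // Q q' s' m'. exact: hm.
Qed.

Lemma card_step {d} (Tprev Tcur Tn : {fset cell d}) j : quadtree Tcur ->
  ext_step Tprev Tcur Tn j ->
  #|` Tn| <= (#|{ffun 'I_d -> 'I_3}| * (1 + #|{ffun 'I_d -> bool}|)) * #|` Tcur|.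
Proof.
move=> qT [_ _ _ hm]. have [q s m] := PQset Tprev Tcur j qT.
apply: leq_trans (cardQ Tcur). apply: fsubset_leq_card. exact: hm.
Qed.

Fixpoint pseq {A : Type} (F : A -> A -> nat -> A) (a0 a1 : A) (n : nat) : A * A :=
  match n with
  | 0 => (a0, a1)
  | n'.+1 => let pr := pseq F a0 a1 n' in (pr.2, F pr.1 pr.2 n)
  end.

Theorem corollary14 (d : nat) :
  exists C : nat, forall T1 : {fset cell d}, quadtree T1 ->
    (exists Ts, extended_seq T1 Ts) /\
    (forall Ts, extended_seq T1 Ts -> #|` Ts d.+1| <= C * #|` T1|).
Proof.
set M := #|{ffun 'I_d -> 'I_3}| * (1 + #|{ffun 'I_d -> bool}|).
exists (M ^ d) => T1 qT1. split.
- have step : forall (Tp Tc : {fset cell d}) j, exists Tn, quadtree Tc -> ext_step Tp Tc Tn j.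
    move=> Tp Tc j. case: (classic (quadtree Tc)) => h.
      by have [Tn hTn] := ex_step Tp Tc j h; exists Tn.
    by exists fset0.
  pose F Tp Tc j := proj1_sig (constructive_indefinite_description _ (step Tp Tc j)).
  have hF : forall Tp Tc j, quadtree Tc -> ext_step Tp Tc (F Tp Tc j) j.
    move=> Tp Tc j. exact: (proj2_sig (constructive_indefinite_description _ (step Tp Tc j))).
  pose Ts n := (pseq F fset0 T1 n).1.
  have eS : forall n, Ts n.+2 = F (Ts n) (Ts n.+1) n.+1 by [].
  have qTs : forall n, quadtree (Ts n.+1).
    elim=> [//|n IH]. rewrite eS. by have [] := hF (Ts n) (Ts n.+1) n.+1 IH.
  exists Ts; split => //. case=> [//|j] _. rewrite /= eS. exact: hF.
- move=> Ts [h0 h1 hs].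
  suff : forall n, n <= d -> quadtree (Ts n.+1) /\ #|` Ts n.+1| <= M ^ n * #|` T1|.
    by move=> /(_ d (leqnn d)) [].
  elim=> [|n IH] hn; first by rewrite h1 expn0 mul1n.
  have [qn cn] := IH (ltnW hn).
  have hst := hs n.+1 hn.
  split; first by case: hst.
  apply: leq_trans (card_step _ _ _ _ qn hst) _.
  apply: (@leq_trans (M * (M ^ n * #|` T1|))); first by apply: leq_mul.
  by rewrite expnS mulnA.
Qed.
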